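(* Let $G=(V,E)$ be a plane graph that is reduced with respect to Rules 1 and 2, let $D$ be a dominating set of $G$, and let $\mathcal R$ be a maximal $D$-region decomposition of $G$. If $v\in D$ and $u\in N_1(v)$, then $u\in V(\mathcal R)$.
   Context: A plane graph is a planar graph together with a fixed planar embedding. $N(v)$ is the open neighborhood, $N[v]=N(v)\cup\{v\}$, $N(v,w)=N(v)\cup N(w)$, $N[v,w]=N[v]\cup N[w]$, and $N_1(v)=\{u\in N(v):N(u)\setminus N[v]\ne\emptyset\}$. Region: for vertices $v,w$ of a plane graph $G$, a region $R(v,w)$ between $v$ and $w$ is a closed subset of the plane such that (1) its boundary is formed by two simple paths $P_1,P_2$ of $G$ from $v$ to $w$, each of length at most three (the paths may coincide, giving a degenerate region consisting of a single path), and (2) every vertex lying strictly inside $R(v,w)$ belongs to $N(v,w)$. $V(R)$ is the set of vertices lying inside or on the boundary of $R$. $D$-region decomposition: for $D\subseteq V$, a set $\mathcal R$ of regions, each between two vertices of $D$, such that (1) for each $R(v,w)\in\mathcal R$, no vertex of $D$ other than $v,w$ lies in $V(R(v,w))$, and (2) no two regions of $\mathcal R$ intersect except possibly along common boundary. $V(\mathcal R)=\bigcup_{R\in\mathcal R}V(R)$. $\mathcal R$ is maximal if there is no region $R\notin\mathcal R$ such that $\mathcal R\cup\{R\}$ is a $D$-region decomposition with $V(\mathcal R)\subsetneq V(\mathcal R\cup\{R\})$. Reduced: with $N_2(v)=\{u\in N(v)\setminus N_1(v):N(u)\cap N_1(v)\ne\emptyset\}$, $N_3(v)=N(v)\setminus(N_1(v)\cup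 N_2(v))$, and analogously $N_1(v,w),N_2(v,w),N_3(v,w)$ with $N(v,w),N[v,w]$ in place of $N(v),N[v]$: Rule 1 (when $N_3(v)\ne\emptyset$) removes $N_2(v)\cup N_3(v)$ and attaches a new pendant vertex to $v$; Rule 2 (for $v\ne w$ with $N_3(v,w)\ne\emptyset$ not dominated by a single vertex of $N_2(v,w)\cup N_3(v,w)$) in case $N_3(v,w)\subseteq N(v)\cap N(w)$ removes $N_3(v,w)$ and $N_2(v,w)\cap N(v)\cap N(w)$ and adds two new vertices each adjacent to exactly $v$ and $w$; in case $N_3(v,w)\subseteq N(v)$, $\not\subseteq N(w)$ removes $N_3(v,w)$ and $N_2(v,w)\cap N(v)$ and attaches a new pendant vertex to $v$ (symmetrically with $v,w$ exchanged); otherwise removes $N_3(v,w)\cup N_2(v,w)$ and attaches new pendant vertices to both $v$ and $w$. $G$ is reduced if no application of either rule changes $G$ up to isomorphism. *)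

(* Defs.v *)
From HB Require Import structures.
From mathcomp Require Import all_boot all_order all_algebra.
From mathcomp Require Import all_classical all_reals all_analysis.
Set Implicit Arguments. Unset Strict Implicit. Unset Printing Implicit Defensive.
Import Order.TTheory GRing.Theory Num.Theory.
Import numFieldNormedType.Exports.

Section Graphs.
Variables (V : finType) (e : rel V).

Definition simple_graph := symmetric e /\ irreflexive e.

Definition nbh (v : V) : {set V} := [set u | e v u].
Definition cnbh (v : V) : {set V} := v |: nbh v.

Definition N1 (v : V) : {set V} :=
  [set u in nbh v | nbh u :\: cnbh v != finset.set0].
Definition N2 (v : V) : {set V} :=
  [set u in nbh v :\: N1 v | nbh u :&: N1 v != finset.set0].
Definition N3 (v : V) : {set V} := nbh v :\: (N1 v :|: N2 v).

Definition nbh2 (v w : V) : {set V} := (nbh v :|: nbh w) :\: [set v; w].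
Definition cnbh2 (v w : V) : {set V} := cnbh v :|: cnbh w.

Definition N1p (v w : V) : {set V} :=
  [set u in nbh2 v w | nbh u :\: cnbh2 v w != finset.set0].
Definition N2p (v w : V) : {set V} :=
  [set u in nbh2 v w :\: N1p v w | nbh u :&: N1p v w != finset.set0].
Definition N3p (v w : V) : {set V} := nbh2 v w :\: (N1p v w :|: N2p v w).

Definition dominating (D : {set V}) :=
  forall u : V, u \in D \/ exists2 d, d \in D & e d u.

(* A graph on (a subset of) an arbitrary finite type: a vertex-presence
   predicate P and an adjacency relation e'.  [iso_to P e'] says that
   G = (V, e) is isomorphic to the graph induced on P by e'. *)
Definition iso_to (T : finType) (P : pred T) (e' : rel T) :=
  exists f : V -> T,
    [/\ injective f, (forall x, P (f x)),
        (forall y, P y -> exists x, f x = y)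
      & forall x y, e' (f x) (f y) = e x y].

(* Result of a rule: the old vertices that are kept (keep), plus at most
   two new vertices (indexed by 'I_2, present according to newv), where
   a new vertex i is adjacent exactly to the old vertices x with att x i. *)
Definition res_present (keep : pred V) (newv : pred 'I_2) : pred (V + 'I_2) :=
  fun z => match z with inl x => keep x | inr i => newv i end.
Definition res_rel (att : V -> 'I_2 -> bool) : rel (V + 'I_2) :=
  fun a b => match a, b with
             | inl x, inl y => e x y
             | inl x, inr i => att x i
             | inr i, inl x => att x i
             | inr _, inr _ => false
             end.

(* Rule 1 at v (applicable when N_3(v) is nonempty): remove
   N_2(v) u N_3(v), attach one new pendant vertex to v. *)
Definition rule1_keep (v : V) : pred V := fun x => x \notin N2 v :|: N3 v.
Definition rule1_new : pred 'I_2 := fun i => val i == 0%N.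
Definition rule1_att (v : V) : V -> 'I_2 -> bool := fun x _ => x == v.

Definition rule2_applicable (v w : V) :=
  [/\ v != w, N3p v w != finset.set0 &
      ~~ [exists x in N2p v w :|: N3p v w, N3p v w \subset cnbh x]].

Definition rule2_keep (v w : V) : pred V := fun x =>
  if (N3p v w \subset nbh v) && (N3p v w \subset nbh w) then
    x \notin N3p v w :|: (N2p v w :&: nbh v :&: nbh w)
  else if N3p v w \subset nbh v then
    x \notin N3p v w :|: (N2p v w :&: nbh v)
  else if N3p v w \subset nbh w then
    x \notin N3p v w :|: (N2p v w :&: nbh w)
  else x \notin N3p v w :|: N2p v w.

Definition rule2_new (v w : V) : pred 'I_2 := fun i =>
  if (N3p v w \subset nbh v) && (N3p v w \subset nbh w) then true
  else if N3p v w \subset nbh v then val i == 0%N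
  else if N3p v w \subset nbh w then val i == 0%N
  else true.

Definition rule2_att (v w : V) : V -> 'I_2 -> bool := fun x i =>
  if (N3p v w \subset nbh v) && (N3p v w \subset nbh w) then (x == v) || (x == w)
  else if N3p v w \subset nbh v then x == v
  else if N3p v w \subset nbh w then x == w
  else if val i == 0%N then x == v else x == w.

(* G is reduced: every application of Rule 1 or Rule 2 yields a graph
   isomorphic to G. *)
Definition reduced :=
  (forall v, N3 v != finset.set0 ->
     iso_to (res_present (rule1_keep v) rule1_new) (res_rel (rule1_att v))) /\
  (forall v w, rule2_applicable v w ->
     iso_to (res_present (rule2_keep v w) (rule2_new v w)) (res_rel (rule2_att v w))).

(* simple path v = x_0, x_1, ..., x_k = w given as v :: p, length k <= 3 *)
Definition spath (v w : V) (p : seq V) :=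
  [/\ path e v p, uniq (v :: p), last v p = w & (size p <= 3)%N].

End Graphs.

Local Open Scope classical_set_scope.
Local Open Scope ring_scope.

Section Plane.
Variables (R : realType) (V : finType) (e : rel V).
Variables (pos : V -> R * R) (arc : V -> V -> R -> R * R).

(* pos x is the point of vertex x; for an edge xy, arc x y restricted to
   [0,1] is a simple curve from pos x to pos y. *)
Definition plane_embedding :=
  [/\ injective pos,
      (forall x y, e x y ->
         [/\ arc x y 0 = pos x, arc x y 1 = pos y,
             {within `[(0:R), 1]%classic, continuous (arc x y)},
             (forall s t, 0 <= s <= 1 -> 0 <= t <= 1 ->
                arc x y s = arc x y t -> s = t)
           & forall t, arc y x t = arc x y (1 - t)]),
      (forall x y z s, e x y -> 0 <= s <= 1 -> arc x y s = pos z ->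
         z = x \/ z = y)
    &
      (forall x y x' y' s t, e x y -> e x' y' -> 0 <= s <= 1 -> 0 <= t <= 1 ->
         arc x y s = arc x' y' t ->
         [\/ x = x' /\ y = y', x = y' /\ y = x' | exists z, arc x y s = pos z])].

Definition edge_pts (x y : V) : set (R * R) := arc x y @` `[(0:R), 1]%classic.

Definition path_pts (v : V) (p : seq V) : set (R * R) :=
  [set z | exists2 x, x \in v :: p & z = pos x] `|`
  [set z | exists2 xy, xy \in zip (v :: p) p & edge_pts xy.1 xy.2 z].

Definition bd (S : set (R * R)) : set (R * R) := closure S `\` interior S.

Definition region (v w : V) (S : set (R * R)) :=
  [/\ closed S,
      (exists p1 p2, [/\ spath e v w p1, spath e v w p2 &
                         bd S = path_pts v p1 `|` path_pts v p2])
    & forall u, interior S (pos u) -> u \in nbh e v :|: nbh e w].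

Definition region_vertices (S : set (R * R)) : set V := [set u | S (pos u)].

(* a region together with its two end vertices *)
Definition regT := (V * V * set (R * R))%type.

Definition region_decomp (D : {set V}) (RR : set regT) :=
  (forall r : regT, RR r ->
     [/\ r.1.1 \in D, r.1.2 \in D, r.1.1 != r.1.2, region r.1.1 r.1.2 r.2
       & forall u, u \in D -> region_vertices r.2 u -> u = r.1.1 \/ u = r.1.2]) /\
  (forall r1 r2 : regT, RR r1 -> RR r2 -> r1 <> r2 ->
     r1.2 `&` r2.2 `<=` bd r1.2 `&` bd r2.2).

Definition decomp_vertices (RR : set regT) : set V :=
  [set u | exists2 r, RR r & region_vertices r.2 u].

Definition maximal_decomp (D : {set V}) (RR : set regT) :=
  region_decomp D RR /\
  ~ (exists r : regT, [/\ ~ RR r, region_decomp D (RR `|` [set r]) &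
        decomp_vertices RR `<` decomp_vertices (RR `|` [set r])]).

End Plane.

(* Main.v *)
Require Import Defs.
From HB Require Import structures.
From mathcomp Require Import all_boot all_order all_algebra.
From mathcomp Require Import all_classical all_reals all_analysis.
From mathcomp Require Import lra.
Set Implicit Arguments. Unset Strict Implicit. Unset Printing Implicit Defensive.
Import Order.TTheory GRing.Theory Num.Theory.
Import numFieldNormedType.Exports.
Local Open Scope classical_set_scope.
Local Open Scope ring_scope.


Section Topo.
Variable R : realType.
Notation T := (R * R)%type.

Lemma ballR (x y d : R) : ball x d y <-> `|x - y| < d.
Proof. by rewrite -ball_normE. Qed.

Lemma ballR2 (p y : T) d : ball p d y <-> `|p.1 - y.1| < d /\ `|p.2 - y.2| < d.
Proof. by rewrite /ball /= /prod_ball !ballR. Qed.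

Lemma hausT : hausdorff_space T.
Proof. exact: norm_hausdorff. Qed.

Lemma closed1T (x : T) : closed [set x].
Proof. by apply: accessible_closed_set1; apply: hausdorff_accessible; exact: hausT. Qed.

Lemma int1T (x : T) : ~ (interior [set x]) x.
Proof.
move=> /nbhs_ballP [d /= d0 /(_ (x.1 + d/2, x.2))] H.
have : (x.1 + d / 2, x.2) = x.
  apply: H; apply/ballR2 => /=; split; last by rewrite subrr normr0.
  by rewrite opprD addrA subrr sub0r normrN gtr0_norm ?divr_gt0 // ltr_pdivrMr // ltr_pMr // ltr1n.
move/(congr1 fst) => /= /eqP; rewrite -subr_eq0 addrAC subrr add0r; apply/negP.
by rewrite gt_eqF // divr_gt0.
Qed.

Lemma image_closed (g : R -> T) a b :
  {within `[a, b], continuous g} -> closed (g @` `[a, b]).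
Proof.
move=> cg; apply: compact_closed; first exact: hausT.
by apply: continuous_compact => //; exact: segment_compact.
Qed.

Lemma int_union (A B : set T) :
  closed A -> (forall z, ~ interior A z) -> (forall z, ~ interior B z) ->
  forall z, ~ interior (A `|` B) z.
Proof.
move=> cA iA iB z hz.
have W : forall y, interior (A `|` B) y -> A y.
  move=> y hy; apply: contrapT => nAy; apply: (iB y).
  have : nbhs y (interior (A `|` B) `&` ~` A).
    apply: open_nbhs_nbhs; split => //; apply: openI; first exact: open_interior.
    exact: closed_openC.
  apply: filterS => w [/interior_subset [] // ? ?].
apply: (iA z); rewrite /interior.
have : nbhs z (interior (A `|` B)) by apply: open_nbhs_nbhs; split => //; exact: open_interior.
by apply: filterS.
Qed.

End Topo.


Section T2.
Variable R : realType.
Notation T := (R * R)%type.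

Lemma btw (lo hi a b t : R) : lo < a < hi -> lo < b < hi ->
  Num.min a b <= t <= Num.max a b -> lo < t < hi.
Proof.
move=> /andP[h1 h2] /andP[h3 h4]; case: (leP a b) => ab;
 move=> /andP[h5 h6]; apply/andP; split; lra.
Qed.

Definition hseg (c a b : R) : set T := (fun t => (t, c)) @` `[Num.min a b, Num.max a b].
Definition vseg (c a b : R) : set T := (fun t => (c, t)) @` `[Num.min a b, Num.max a b].

Lemma hseg_conn c a b : connected (hseg c a b).
Proof.
apply: connected_continuous_connected; first exact: segment_connected.
apply: continuous_subspaceT => t; exact: (cvg_pair cvg_id (cvg_cst _)).
Qed.
Lemma vseg_conn c a b : connected (vseg c a b).
Proof.
apply: connected_continuous_connected; first exact: segment_connected.
apply: continuous_subspaceT => t; exact: (cvg_pair (cvg_cst _) cvg_id).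
Qed.

Lemma in_mm (a b : R) : `[Num.min a b, Num.max a b]%classic a /\ `[Num.min a b, Num.max a b]%classic b.
Proof.
case: (leP a b) => ab; rewrite /= !in_itv /=; split; apply/andP; split; lra.
Qed.

Lemma hseg_a c a b : hseg c a b (a, c). Proof. by exists a => //; case: (in_mm a b). Qed.
Lemma hseg_b c a b : hseg c a b (b, c). Proof. by exists b => //; case: (in_mm a b). Qed.
Lemma vseg_a c a b : vseg c a b (c, a). Proof. by exists a => //; case: (in_mm a b). Qed.
Lemma vseg_b c a b : vseg c a b (c, b). Proof. by exists b => //; case: (in_mm a b). Qed.

Lemma inA (p y : T) d : `|p.1 - y.1| < d -> `|p.2 - y.2| < d -> y <> p ->
  (ball p d `\` [set p]) y.
Proof. by move=> h1 h2 h3; split => //; apply/ballR2. Qed.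

Lemma cc_of (A C : set T) x y : C x -> C y -> C `<=` A -> connected C ->
  connected_component A x y.
Proof. by move=> Cx Cy CA cC; exists C. Qed.

Lemma punct_conn (p : T) d : 0 < d -> connected (ball p d `\` [set p]).
Proof.
move=> d0; set A := ball p d `\` [set p].
set q0 : T := (p.1 + d/2, p.2 + d/2).
have d2 : 0 < d / 2 by rewrite divr_gt0.
have dd : d / 2 < d by rewrite ltr_pdivrMr // ltr_pMr // ltr1n.
have close : forall a b, `|a - b| < d = (a - d < b < a + d) by move=> a b; rewrite ltr_distlC.
have hA : forall c a b, `|p.1 - a| < d -> `|p.1 - b| < d -> `|p.2 - c| < d -> c != p.2 ->
    hseg c a b `<=` A.
  move=> c a b ha hb hc cp _ [t ht <-]; apply: inA => //=.
    rewrite close; move: ha hb; rewrite !close => ha hb; exact: btw ha hb ht.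
  by move=> /(congr1 snd) /= /eqP; rewrite (negbTE cp).
have vA : forall c a b, `|p.2 - a| < d -> `|p.2 - b| < d -> `|p.1 - c| < d -> c != p.1 ->
    vseg c a b `<=` A.
  move=> c a b ha hb hc cp _ [t ht <-]; apply: inA => //=.
    rewrite close; move: ha hb; rewrite !close => ha hb; exact: btw ha hb ht.
  by move=> /(congr1 fst) /= /eqP; rewrite (negbTE cp).
have q1d : `|p.1 - (p.1 + d/2)| < d by rewrite opprD addrA subrr sub0r normrN gtr0_norm.
have q2d : `|p.2 - (p.2 + d/2)| < d by rewrite opprD addrA subrr sub0r normrN gtr0_norm.
have q1n : p.1 + d/2 != p.1 by rewrite -subr_eq0 addrAC subrr add0r gt_eqF.
have q2n : p.2 + d/2 != p.2 by rewrite -subr_eq0 addrAC subrr add0r gt_eqF.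
suff -> : A = connected_component A q0 by exact: component_connected.
apply/seteqP; split; last exact: connected_component_sub.
move=> y Ay; apply: connected_component_sym.
have [/ballR2 [y1d y2d] yp] := Ay.
have [y2p|y2p] := eqVneq y.2 p.2.
- have y1p : y.1 != p.1.
    apply/negP => /eqP y1p; apply: yp; case: y y1p y2p {Ay y1d y2d} => a b /= -> ->.
    by case: p {A q0 hA vA q1d q2d q1n q2n}.
  apply: (@connected_component_trans _ _ (y.1, p.2 + d/2)).
    apply: (@cc_of _ (vseg y.1 y.2 (p.2 + d/2))); last exact: vseg_conn.
    + by case: y {Ay yp y1d y2d y1p y2p} => a b; exact: vseg_a.
    + exact: vseg_b.
    + by apply: vA => //; rewrite y2p subrr normr0.
  apply: (@cc_of _ (hseg (p.2 + d/2) y.1 (p.1 + d/2))); last exact: hseg_conn.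
  + exact: hseg_a.
  + exact: hseg_b.
  + exact: hA.
- apply: (@connected_component_trans _ _ (p.1 + d/2, y.2)).
    apply: (@cc_of _ (hseg y.2 y.1 (p.1 + d/2))); last exact: hseg_conn.
    + by case: y {Ay yp y1d y2d y2p} => a b; exact: hseg_a.
    + exact: hseg_b.
    + exact: hA.
  apply: (@cc_of _ (vseg (p.1 + d/2) y.2 (p.2 + d/2))); last exact: vseg_conn.
  + exact: vseg_a.
  + exact: vseg_b.
  + exact: vA.
Qed.
End T2.


Section T3.
Variable R : realType.
Notation T := (R * R)%type.

Lemma three (U : eqType) (q0 q1 q2 a b : U) : q0 != q1 -> q0 != q2 -> q1 != q2 ->
  exists2 q, q \in [:: q0; q1; q2] & (q != a) && (q != b).
Proof.
move=> h01 h02 h12.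
case/boolP: ((q0 != a) && (q0 != b)) => [h0|]; first by exists q0; rewrite ?inE ?eqxx.
case/boolP: ((q1 != a) && (q1 != b)) => [h1|]; first by exists q1; rewrite ?inE ?eqxx ?orbT.
rewrite !negb_and !negbK => h1 h0; exists q2; first by rewrite ?inE ?eqxx ?orbT.
apply/andP; split; apply/eqP => E; subst q2;
 case/orP: h0 => /eqP E0; case/orP: h1 => /eqP E1; subst;
 by rewrite ?eqxx in h01 h02 h12.
Qed.

Lemma itv01 (s : R) : `[0, 1]%classic s <-> 0 <= s <= 1.
Proof. by rewrite /= in_itv. Qed.

Lemma avoid2 (z a b : T) e : 0 < e -> exists p, [/\ ball z e p, p <> a & p <> b].
Proof.
move=> e0.
have e2 : 0 < e / 2 by rewrite divr_gt0.
have ee : e / 2 < e by rewrite ltr_pdivrMr // ltr_pMr // ltr1n.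
have h01 : z != (z.1 + e/2, z.2) by apply/eqP => /(congr1 fst) /= H; lra.
have h02 : z != (z.1 - e/2, z.2) by apply/eqP => /(congr1 fst) /= H; lra.
have h12 : (z.1 + e/2, z.2) != (z.1 - e/2, z.2) by apply/eqP => /(congr1 fst) /= H; lra.
have [q qin /andP[qa qb]] := three a b h01 h02 h12.
exists q; split; [|exact/eqP|exact/eqP].
move: qin; rewrite !inE => /or3P[] /eqP ->; apply/ballR2 => /=; rewrite ?subrr ?normr0 //;
  split => //.
- by rewrite ltr_distlC; apply/andP; split; lra.
- by rewrite ltr_distlC; apply/andP; split; lra.
Qed.

Lemma arc_int0 (g : R -> T) : {within `[0, 1], continuous g} ->
  (forall s t, 0 <= s <= 1 -> 0 <= t <= 1 -> g s = g t -> s = t) ->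
  forall z, ~ interior (g @` `[0, 1]) z.
Proof.
move=> cg ig z /nbhs_ballP [e /= e0 eK].
have [p [zp pa pb]] := avoid2 z (g 0) (g 1) e0.
have : nbhs p (g @` `[0, 1]).
  apply: (filterS eK); apply: open_nbhs_nbhs; split => //; exact: ball_open.
move=> /nbhs_ballP [d /= d0 dK].
have [t0 /itv01 t0i gt0] := dK p (ballxx p d0).
have t0n0 : t0 != 0 by apply/eqP => t00; apply: pa; rewrite -gt0 t00.
have t0n1 : t0 != 1 by apply/eqP => t01; apply: pb; rewrite -gt0 t01.
have {t0n0 t0n1 t0i} [t0p t01] : 0 < t0 /\ t0 < 1.
  by move: t0i => /andP[]; rewrite !le_eqVlt eq_sym (negbTE t0n0) (negbTE t0n1).
have [eta eta0 etaP] : exists2 eta, 0 < eta &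
    forall s, 0 <= s <= 1 -> `|t0 - s| < eta -> ball p d (g s).
  have := (subspace_continuousP _ _).1 cg t0 (proj2 (itv01 t0) (ltac:(by rewrite !ltW))).
  rewrite -gt0 => /(_ _ (nbhsx_ballx (g t0) d d0)).
  rewrite /= nbhs_simpl /= => /nbhs_ballP [eta /= eta0 H]; exists eta => // s si st.
  by apply: H; [apply/ballR|apply/itv01].
set m1 := Num.min eta t0; set m2 := Num.min eta (1 - t0).
have /andP[m1e m1t] : (m1 <= eta) && (m1 <= t0) by rewrite -le_min.
have /andP[m2e m2t] : (m2 <= eta) && (m2 <= 1 - t0) by rewrite -le_min.
have m10 : 0 < m1 by rewrite lt_min eta0 t0p.
have m20 : 0 < m2 by rewrite lt_min eta0 subr_gt0 t01.
set s1 := t0 - m1 / 2; set s2 := t0 + m2 / 2.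
have s1i : 0 <= s1 <= 1 by apply/andP; split; rewrite /s1; lra.
have s2i : 0 <= s2 <= 1 by apply/andP; split; rewrite /s2; lra.
have gs1 : ball p d (g s1) by apply: etaP => //; rewrite /s1 opprB addrC subrK gtr0_norm; lra.
have gs2 : ball p d (g s2) by apply: etaP => //; rewrite /s2 opprD addrA subrr sub0r normrN gtr0_norm; lra.
set C1 := g @` `[0, t0]; set C2 := g @` `[t0, 1].
have sub1 : `[0, t0] `<=` `[0, 1]%classic.
  by move=> s; rewrite /= !in_itv /= => /andP[h1 h2]; rewrite h1 /=; lra.
have sub2 : `[t0, 1] `<=` `[0, 1]%classic.
  by move=> s; rewrite /= !in_itv /= => /andP[h1 h2]; rewrite h2 andbT; lra.
have cC1 : closed C1 by apply: image_closed; exact: continuous_subspaceW cg.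
have cC2 : closed C2 by apply: image_closed; exact: continuous_subspaceW cg.
set A := ball p d `\` [set p].
have AC : A `<=` C1 `|` C2.
  move=> y [/dK [s si <-] _]; move: si => /itv01 /andP[s0 s1'].
  have [st|st] := leP s t0; [left|right]; exists s => //=; rewrite in_itv /=; apply/andP; split; lra.
have s1ne : g s1 <> p by rewrite -gt0 => /ig => /(_ s1i); rewrite !ltW //= => /(_ isT); rewrite /s1; lra.
have s2ne : g s2 <> p by rewrite -gt0 => /ig => /(_ s2i); rewrite !ltW //= => /(_ isT); rewrite /s2; lra.
have C12 : forall y, C1 y -> C2 y -> y = p.
  move=> _ [r1 r1i <-] [r2 r2i Er]; move: r1i r2i; rewrite /= !in_itv /= => /andP[h1 h2] /andP[h3 h4].
  have r21 := ig r2 r1 (ltac:(apply/andP; split; lra)) (ltac:(apply/andP; split; lra)) Er.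
  have -> : r1 = t0 by lra.
  by [].
have s2C1 : ~ C1 (g s2).
  move=> [r ri Er]; move: ri; rewrite /= in_itv /= => /andP[h1 h2].
  have := ig r s2 (ltac:(apply/andP; split; lra)) s2i Er; rewrite /s2; lra.
have eq1 : A `&` C1 = A `&` ~` C2.
  apply/seteqP; split => y.
    by move=> [Ay C1y]; split => // C2y; case: Ay => _; apply; exact: C12.
  by move=> [Ay nC2]; split => //; case: (AC y Ay).
have s1C1 : C1 (g s1) by exists s1 => //=; rewrite in_itv /=; apply/andP; split; rewrite /s1; lra.
have H := @punct_conn R p d d0 (A `&` ~` C2).
have : (A `&` ~` C2) (g s2).
  rewrite H //.
  - exists (g s1); split; first by split.
    by move=> C2s1; apply: s1ne; exact: C12.
  - by exists (~` C2) => //; exact: closed_openC.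
  - by exists C1.
case=> _; apply; exists s2 => //=; rewrite in_itv /=; apply/andP; split; rewrite /s2; lra.
Qed.
End T3.


Lemma zip_mem (U : eqType) (s t : seq U) a b : (a, b) \in zip s t -> (a \in s) && (b \in t).
Proof.
elim: s t => [|x s IH] [|y t] //=.
rewrite inE => /orP[/eqP [-> ->]|/IH /andP[h1 h2]]; first by rewrite !inE !eqxx.
by rewrite !inE h1 h2 !orbT.
Qed.

Lemma zip_path (U : eqType) (r : rel U) v p a b : path r v p -> (a, b) \in zip (v :: p) p -> r a b.
Proof.
elim: p v => [|y p IH] v //= /andP[rvy pp].
rewrite inE => /orP[/eqP [-> ->] //|]; exact: IH.
Qed.

Lemma int1T' (R : realType) (x z : (R * R)%type) : ~ interior [set x] z.
Proof. by move=> h; have /= zx := interior_subset h; subst z; exact: int1T h. Qed.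

Section Emb.
Variables (R : realType) (V : finType) (e : rel V).
Variables (pos : V -> R * R) (arc : V -> V -> R -> R * R).
Hypothesis sg : simple_graph e.
Hypothesis pe : plane_embedding e pos arc.
Notation T := (R * R)%type.

Lemma harc x y : e x y -> [/\ arc x y 0 = pos x, arc x y 1 = pos y,
             {within `[(0:R), 1]%classic, continuous (arc x y)},
             (forall s t, 0 <= s <= 1 -> 0 <= t <= 1 ->
                arc x y s = arc x y t -> s = t)
           & forall t, arc y x t = arc x y (1 - t)].
Proof. by case: pe => _ H _ _; exact: H. Qed.

Lemma hvtx x y z s : e x y -> 0 <= s <= 1 -> arc x y s = pos z -> z = x \/ z = y.
Proof. by case: pe => _ _ H _; exact: H. Qed.

Lemma hcross x y x' y' s t : e x y -> e x' y' -> 0 <= s <= 1 -> 0 <= t <= 1 ->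
         arc x y s = arc x' y' t ->
         [\/ x = x' /\ y = y', x = y' /\ y = x' | exists z, arc x y s = pos z].
Proof. by case: pe => _ _ _ H; exact: H. Qed.

Lemma pinj : injective pos. Proof. by case: pe. Qed.

Lemma esym x y : e x y -> e y x.
Proof. by case: sg => s _ h; rewrite s. Qed.

Lemma eneq x y : e x y -> x != y.
Proof. by case: sg => _ i h; apply/eqP => E; subst; rewrite i in h. Qed.

Lemma edge_closed x y : e x y -> closed (edge_pts arc x y).
Proof. by move=> /harc [_ _ c _ _]; exact: image_closed. Qed.

Lemma edge_int x y : e x y -> forall z, ~ interior (edge_pts arc x y) z.
Proof. by move=> /harc [_ _ c i _]; exact: arc_int0. Qed.

Lemma edge_rev x y s : e x y -> 0 <= s <= 1 -> edge_pts arc y x (arc x y s).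
Proof.
move=> exy s01; have [_ _ _ _ sym] := harc (esym exy).
exists (1 - s); first by apply/itv01; apply/andP; split; move: s01 => /andP[]; lra.
by rewrite sym.
Qed.

Lemma edge_rev_set x y : e x y -> edge_pts arc x y `<=` edge_pts arc y x.
Proof. by move=> exy _ [s /itv01 s01 <-]; exact: edge_rev. Qed.

Lemma path_pts_nil y : path_pts pos arc y [::] = [set pos y].
Proof.
apply/seteqP; split => z.
  by case=> [[x]|[xy]] //=; rewrite inE => /eqP -> ->.
by move=> ->; left; exists y; rewrite ?inE.
Qed.

Lemma path_pts_cons v y p : e v y ->
  path_pts pos arc v (y :: p) = edge_pts arc v y `|` path_pts pos arc y p.
Proof.
move=> evy; have [h0 h1 _ _ _] := harc evy.
apply/seteqP; split => z.
- case=> [[x]|[xy]].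
    rewrite inE => /orP[/eqP -> ->|xin ->]; first by left; exists 0 => //; apply/itv01; rewrite lexx ler01.
    by right; left; exists x.
  rewrite /= inE => /orP[/eqP -> //|xin ez]; first by left.
  by right; right; exists xy.
- case=> [ez|[[x xin ->]|[xy xin ez]]].
    by right; exists (v, y) => //; rewrite /= inE eqxx.
  by left; exists x => //; rewrite inE xin orbT.
  by right; exists xy => //; rewrite /= inE xin orbT.
Qed.

Lemma path_pts_top v p : path e v p ->
  closed (path_pts pos arc v p) /\ forall z, ~ interior (path_pts pos arc v p) z.
Proof.
elim: p v => [|y p IH] v /=.
  by move=> _; rewrite path_pts_nil; split; [exact: closed1T|exact: int1T'].
move=> /andP[evy pp]; have [c i] := IH y pp.
rewrite path_pts_cons //; split; first by apply: closedU => //; exact: edge_closed.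
by apply: int_union => //; [exact: edge_closed|exact: edge_int].
Qed.

Lemma bd_path v p : path e v p -> bd (path_pts pos arc v p) = path_pts pos arc v p.
Proof.
move=> /path_pts_top [c i]; rewrite /bd -(proj1 (closure_id _) c).
by apply/seteqP; split => z; [case|move=> h; split => //; exact: i].
Qed.

Lemma vertex_of_path v p y : path e v p -> path_pts pos arc v p (pos y) -> y \in v :: p.
Proof.
move=> pp [[x xin /pinj -> //]|[[a b] ab [s /itv01 s01 E]]].
have /andP[ain bin] := zip_mem ab.
have := hvtx (zip_path pp ab) s01 E; case=> ->; first by [].
by rewrite inE bin orbT.
Qed.

Definition gset (Q : set T) := forall q, Q q ->
  (exists w, q = pos w) \/
  (exists c d t, [/\ e c d, 0 <= t <= 1, q = arc c d t & edge_pts arc c d `<=` Q]).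

Lemma gset_path a p : path e a p -> gset (path_pts pos arc a p).
Proof.
move=> pp q [[x _ ->]|[[c d] cd [t /itv01 t01 <-]]]; first by left; exists x.
right; exists c, d, t; split => //; first exact: zip_path pp cd.
by move=> z ez; right; exists (c, d).
Qed.

Lemma gsetU A B : gset A -> gset B -> gset (A `|` B).
Proof.
move=> gA gB q [/gA|/gB] [[w ->]|[c [d [t [h1 h2 h3 h4]]]]]; try by left; exists w.
- by right; exists c, d, t; split => // z /h4; left.
- by right; exists c, d, t; split => // z /h4; right.
Qed.

Lemma crossing (S Q : set T) y z s0 : closed S -> bd S = Q -> gset Q -> e y z ->
  0 <= s0 <= 1 -> interior S (arc y z s0) -> ~ S (pos z) -> False.
Proof.
move=> cS bdQ gQ eyz s01 iS nSz.
have [a0 a1 ca ia sa] := harc eyz.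
have clS : closure S = S by rewrite -(proj1 (closure_id _) cS).
have bdS q : bd S q <-> S q /\ ~ interior S q by rewrite /bd clS.
have [t [t1 Sq niq]] : exists t, [/\ s0 <= t <= 1, S (arc y z t) & ~ interior S (arc y z t)].
  apply: contrapT => H.
  set K := arc y z @` `[s0, 1].
  have sub : `[s0, 1] `<=` `[0, 1]%classic.
    move=> s; rewrite /= !in_itv /= => /andP[h1 h2]; move: s01 => /andP[h3 h4].
    by apply/andP; split; lra.
  have cK : connected K.
    apply: connected_continuous_connected; first exact: segment_connected.
    exact: continuous_subspaceW ca.
  have : K `&` interior S = K.
    apply: cK.
    - exists (arc y z s0); split => //; exists s0 => //=; rewrite in_itv /= lexx.
      by move: s01 => /andP[].
    - by exists (interior S) => //; exact: open_interior.
    - exists S => //; apply/seteqP; split => q [Kq]; first by move/interior_subset.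
      move=> Sq; split => //; apply: contrapT => nq; apply: H.
      by case: Kq => t ti Et; exists t; rewrite Et; split => //; move: ti; rewrite /= in_itv.
  move=> /seteqP [_ /(_ (arc y z 1))] [].
    by exists 1 => //=; rewrite in_itv /= lexx andbT; move: s01 => /andP[].
  by move=> _ /interior_subset; rewrite a1.
have t01 : 0 <= t <= 1 by move: s01 t1 => /andP[h1 h2] /andP[h3 h4]; apply/andP; split; lra.
have vcase w : arc y z t = pos w -> False.
  move=> E; case: (hvtx eyz t01 E) => ?; subst w.
  - move: E; rewrite -a0 => /ia => /(_ t01); rewrite lexx ler01 => /(_ isT) t0.
    have st : s0 = t by move: t1 s01; rewrite t0 => /andP[h1 _] /andP[h2 _]; lra.
    by apply: niq; rewrite -st.
  - by apply: nSz; rewrite -E.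
have bq : bd S (arc y z t) by apply/bdS.
rewrite bdQ in bq.
have fin : Q (arc y z s0) -> False by rewrite -bdQ => /bdS [_]; exact.
case: (gQ _ bq) => [[w E]|[c [d [t' [ecd t'01 E sub]]]]]; first exact: vcase E.
case: (hcross eyz ecd t01 t'01 E) => [[? ?]|[? ?]|[w Ew]]; last exact: vcase Ew.
- by subst c d; apply: fin; apply: sub; exists s0 => //; apply/itv01.
- by subst c d; apply: fin; apply: sub; exact: edge_rev.
Qed.

Lemma region_info a b S : region e pos arc a b S ->
  closed S /\ exists p1 p2, [/\ spath e a b p1, spath e a b p2 &
     bd S = path_pts pos arc a p1 `|` path_pts pos arc a p2].
Proof. by case. Qed.

Lemma region_gset a b S : region e pos arc a b S -> gset (bd S).
Proof.
move=> /region_info [_ [p1 [p2 [[h1 _ _ _] [h2 _ _ _] ->]]]].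
by apply: gsetU; exact: gset_path.
Qed.

Lemma region_ends a b S : region e pos arc a b S -> bd S (pos a) /\ bd S (pos b).
Proof.
move=> /region_info [_ [p1 [p2 [[h1 _ l _] _ ->]]]]; split; left.
  by left; exists a; rewrite ?inE ?eqxx.
by left; exists b => //; rewrite -l mem_last.
Qed.

Lemma bd_int (S : set T) q : bd S q -> ~ interior S q.
Proof. by case. Qed.

Lemma bd_sub (S : set T) q : closed S -> bd S q -> S q.
Proof. by move=> cS [+ _]; rewrite -(proj1 (closure_id _) cS). Qed.

Lemma CLr a b S y z s : region e pos arc a b S -> e y z -> 0 <= s <= 1 ->
  interior S (arc y z s) -> S (pos z).
Proof.
move=> rg eyz s01 iS; apply: contrapT => nS.
have [cS _] := region_info rg.
exact: (crossing cS erefl (region_gset rg) eyz s01 iS nS).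
Qed.

Lemma pos_lemma a b p x : spath e a b p -> x \in a :: p -> x != a -> x != b ->
  exists c, (c = a \/ c = b) /\ ((x, c) \in zip (a :: p) p \/ (c, x) \in zip (a :: p) p).
Proof.
case=> _ _ <- sz.
case: p sz => [|y1 [|y2 [|y3 [|y4 p]]]] //= _; rewrite !inE.
- by move=> /eqP ->; rewrite eqxx.
- by move=> /orP[/eqP ->|/eqP ->]; rewrite eqxx // andbF.
- move=> /or3P[/eqP ->|/eqP ->|/eqP ->]; rewrite ?eqxx //= => _ _.
  by exists a; split; [left|right; rewrite inE eqxx].
- move=> /or4P[/eqP ->|/eqP ->|/eqP ->|/eqP ->]; rewrite ?eqxx //= => _ _.
  + by exists a; split; [left|right; rewrite inE eqxx].
  + by exists y3; split; [right|left; rewrite !inE eqxx !orbT].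
Qed.

End Emb.

Section Main.
Variables (R : realType) (V : finType) (e : rel V).
Variables (pos : V -> R * R) (arc : V -> V -> R -> R * R).
Hypothesis sg : simple_graph e.
Hypothesis pe : plane_embedding e pos arc.
Notation T := (R * R)%type.
Variables (D : {set V}) (RR : set (regT R V)).
Hypothesis RD : region_decomp e pos arc D RR.
Hypothesis nomax : ~ (exists r : regT R V, [/\ ~ RR r, region_decomp e pos arc D (RR `|` [set r]) &
        decomp_vertices pos RR `<` decomp_vertices pos (RR `|` [set r])]).

Definition NI (z : T) := forall r, RR r -> ~ interior r.2 z.

Lemma NI_path v y p : path e v (y :: p) ->
  (forall a b, (a, b) \in zip (v :: y :: p) (y :: p) -> forall s, 0 <= s <= 1 -> NI (arc a b s)) ->
  forall z, path_pts pos arc v (y :: p) z -> NI z.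
Proof.
elim: p v y => [|y' p IH] v y /= /andP[evy pp] H z.
  rewrite (path_pts_cons pe) // path_pts_nil => -[[s /itv01 s01 <-]|->].
    by apply: H => //; rewrite inE eqxx.
  have [_ <- _ _ _] := harc pe evy; apply: H; first by rewrite inE eqxx.
  by rewrite lexx ler01.
rewrite (path_pts_cons pe) // => -[[s /itv01 s01 <-]|].
  by apply: H => //; rewrite inE eqxx.
apply: IH => // a b ab; apply: H; by rewrite inE ab orbT.
Qed.

Lemma extend v c p u : v \in D -> c \in D -> v != c -> spath e v c p ->
  (forall y, y \in D -> y \in v :: p -> y = v \/ y = c) -> u \in p ->
  ~ decomp_vertices pos RR u ->
  (forall z, path_pts pos arc v p z -> NI z) -> False.
Proof.
move=> vD cD vc sp Dc up nu NIP.
have [pp _ lst _] := sp.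
set P := path_pts pos arc v p.
have [cP iP] := path_pts_top pe pp.
have bdP := bd_path pe pp.
have Pu : P (pos u) by left; exists u => //; rewrite inE up orbT.
apply: nomax; exists ((v, c), P); split.
- by move=> h; apply: nu; exists ((v, c), P).
- split.
  + move=> r [/(proj1 RD) //|->] /=; split => //.
    * split => //; last by move=> y /iP.
      by exists p, p; split => //; rewrite setUid.
    * move=> y yD /(vertex_of_path pe pp) yin; exact: Dc.
  + move=> r1 r2 [h1|->] [h2|->] ne //.
    * exact: (proj2 RD).
    * move=> z [z1 z2] /=; rewrite bdP; split => //; split; first exact: subset_closure.
      exact: NIP z2 r1 h1.
    * move=> z [z1 z2] /=; rewrite bdP; split => //; split; first exact: subset_closure.
      exact: NIP z1 r2 h2.
- split.
    by move=> y [r1 h1 h2]; exists r1 => //; left.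
  move=> /(_ u); apply: contra_not nu => H; apply: H.
  by exists ((v, c), P) => //; right.
Qed.



Lemma main v u : dominating e D -> v \in D -> u \in N1 e v -> decomp_vertices pos RR u.
Proof.
move=> dom vD uN1; apply: contrapT => nu.
move: uN1; rewrite inE => /andP[]; rewrite /nbh inE => evu /set0Pn [x].
rewrite !inE negb_or => /andP[/andP[xv nevx] eux].
have exu := esym sg eux.
have vu : v != u := eneq sg evu.
have ux : u != x := eneq sg eux.
have vx : v != x by rewrite eq_sym.
have nuS r : RR r -> ~ r.2 (pos u) by move=> hr h; apply: nu; exists r.
have regr r : RR r -> region e pos arc r.1.1 r.1.2 r.2 by case/(proj1 RD).
have NIvu s : 0 <= s <= 1 -> NI (arc v u s).
  by move=> s01 r hr /(CLr sg pe (regr _ hr) evu s01); exact: nuS.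
have NIux s : 0 <= s <= 1 -> NI (arc u x s).
  move=> s01 r hr; have [_ _ _ _ ->] := harc pe exu.
  have s01' : 0 <= 1 - s <= 1 by move: s01 => /andP[h1 h2]; apply/andP; split; lra.
  by move/(CLr sg pe (regr _ hr) exu s01'); exact: nuS.
have NIx : NI (pos x).
  move=> r hr; have [<- _ _ _ _] := harc pe exu.
  have h01 : 0 <= (0:R) <= 1 by apply/andP; split; lra.
  by move/(CLr sg pe (regr _ hr) exu h01); exact: nuS.
have [uD|uD] := boolP (u \in D).
  apply: (@extend v u [:: u] u vD uD vu) => //.
  - by split => //=; rewrite ?evu ?inE ?vu.
  - by move=> y _; rewrite !inE => /orP[/eqP ->|/eqP ->]; [left|right].
  - by rewrite inE.
  - apply: NI_path; first by rewrite /= evu.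
    by move=> a b; rewrite !inE => /eqP [-> ->]; exact: NIvu.
have [xD|xD] := boolP (x \in D).
  apply: (@extend v x [:: u; x] u vD xD vx) => //.
  - by split => //=; rewrite ?evu ?eux ?inE ?negb_or ?vu ?vx ?ux.
  - move=> y yD; rewrite !inE => /or3P[/eqP ->|/eqP yu|/eqP ->]; [left| |right] => //.
    by subst y; rewrite yD in uD.
  - by rewrite inE eqxx.
  - apply: NI_path; first by rewrite /= evu eux.
    move=> a b; rewrite !inE => /orP[/eqP [-> ->]|/eqP [-> ->]]; [exact: NIvu|exact: NIux].
have [w wD ewx] : exists2 w, w \in D & e w x.
  by case: (dom x) => [xD'|[w wD ewx]]; [by rewrite xD' in xD|exists w].
have exw := esym sg ewx.
have fin c : c \in D -> e x c -> (forall s, 0 <= s <= 1 -> NI (arc x c s)) -> False.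
  move=> cD exc NIxc.
  have vc : v != c by apply/eqP => vc; subst c; rewrite (esym sg exc) in nevx.
  have uc : u != c by apply/eqP => uc; subst c; rewrite cD in uD.
  have xc : x != c := eneq sg exc.
  apply: (@extend v c [:: u; x; c] u vD cD vc) => //.
  - by split => //=; rewrite ?evu ?eux ?exc ?inE ?negb_or ?vu ?vx ?vc ?ux ?uc ?xc.
  - move=> y yD; rewrite !inE => /or4P[/eqP ->|/eqP yu|/eqP yx|/eqP ->]; [left| | |right] => //.
      by subst y; rewrite yD in uD.
    by subst y; rewrite yD in xD.
  - by rewrite inE eqxx.
  - apply: NI_path; first by rewrite /= evu eux exc.
    move=> a b; rewrite !inE => /or3P[/eqP [-> ->]|/eqP [-> ->]|/eqP [-> ->]];
      [exact: NIvu|exact: NIux|exact: NIxc].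
have [[r [s [hr s01 ir]]]|noint] :=
  pselect (exists r s, [/\ RR r, 0 <= s <= 1 & interior r.2 (arc x w s)]); last first.
  apply: (fin w wD exw) => s s01 r hr ir; apply: noint; exists r, s; split => //.
have rg := regr _ hr.
have [aD bD _ _ _] := proj1 RD r hr.
have [cS [p1 [p2 [sp1 sp2 eqbd]]]] := region_info rg.
have Sx : r.2 (pos x).
  have [_ _ _ _ sym] := harc pe exw.
  have s01' : 0 <= 1 - s <= 1 by move: s01 => /andP[h1 h2]; apply/andP; split; lra.
  apply: (CLr sg pe rg ewx s01'); rewrite sym.
  by have -> : 1 - (1 - s) = s by lra.
have bdx : bd r.2 (pos x) by split; [exact: subset_closure|exact: NIx].
have xa : x != r.1.1 by apply/eqP => E; rewrite E aD in xD.
have xb : x != r.1.2 by apply/eqP => E; rewrite E bD in xD.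
have key : forall p, spath e r.1.1 r.1.2 p -> path_pts pos arc r.1.1 p (pos x) ->
   (path_pts pos arc r.1.1 p `<=` bd r.2) -> False.
  move=> p spp Pp sub; have [pp _ _ _] := spp.
  have xin := vertex_of_path pe pp Pp.
  have [c [cab zc]] := pos_lemma spp xin xa xb.
  have cD : c \in D by case: cab => ->.
  have exc : e x c by case: zc => /(zip_path pp) // /(esym sg).
  apply: (fin c cD exc) => s' s'01 r' hr' ir'.
  have bq : bd r.2 (arc x c s').
    apply: sub; right; case: zc => zc.
      by exists (x, c) => //; exists s' => //; apply/itv01.
    exists (c, x) => //=. exact: (edge_rev sg pe exc s'01).
  have [E|ne] := pselect (r' = r); first by subst r'; exact: bd_int bq ir'.
  have := proj2 RD r r' hr hr' (nesym ne) (arc x c s').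
  case; first by split; [exact: bd_sub cS bq|exact: interior_subset].
  by move=> _ /bd_int; apply.
move: bdx; rewrite eqbd => -[h|h].
  by apply: (key p1 sp1 h); rewrite eqbd => z hz; left.
by apply: (key p2 sp2 h); rewrite eqbd => z hz; right.
Qed.

End Main.

Theorem lemma6 (R : realType) (V : finType) (e : rel V)
    (pos : V -> R * R) (arc : V -> V -> R -> R * R)
    (D : {set V}) (RR : set (regT R V)) :
  simple_graph e ->
  plane_embedding e pos arc ->
  reduced e ->
  dominating e D ->
  maximal_decomp e pos arc D RR ->
  forall v u : V, v \in D -> u \in N1 e v -> decomp_vertices pos RR u.
Proof.
move=> sg pe _ dom [RD nomax] v u vD uN1.
exact: (main sg pe RD nomax dom vD uN1).
Qed.
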